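(* Given $A_7,A_8\in\mathbb R$, there exist $\gamma_2,\gamma_3\in C^\infty([-1,1])$ such that \[ \gamma_2(t)=\begin{cases}-\frac12A_7^2t & t\ge\frac34\\ -\frac12A_8^2t & t\le-\frac34\end{cases},\qquad \gamma_3(t)=\begin{cases}A_7t & t\ge\frac34\\ A_8t & t\le-\frac34\end{cases}, \] and $2\gamma_2'+(\gamma_3')^2=0$ on $[-1,1]$. *)

(* Defs.v *)
From Stdlib Require Import Reals.
From Coquelicot Require Import Coquelicot.
Open Scope R_scope.

Definition smooth_on_I (f : R -> R) : Prop :=
  forall (n : nat) (x : R), -1 <= x <= 1 -> ex_derive (Derive_n f n) x.

(* Main.v *)
Require Import Defs.
From Stdlib Require Import Reals Lra Lia FunctionalExtensionality.
From Coquelicot Require Import Coquelicot.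
Open Scope R_scope.

Fixpoint Cn (n : nat) (f : R -> R) : Prop :=
  match n with
  | O => True
  | S n => exists f', (forall x, is_derive f x (f' x)) /\ Cn n f'
  end.

Definition Sm f := forall n, Cn n f.

Lemma Cn_S n : forall f, Cn (S n) f -> Cn n f.
Proof.
  induction n as [|n IH]; intros f H; simpl; auto.
  destruct H as [f' [Hd Hc]]. exists f'; split; auto.
Qed.

Lemma Cn_ext n : forall f g, (forall x, f x = g x) -> Cn n f -> Cn n g.
Proof.
  destruct n; intros f g E H; simpl; auto.
  destruct H as [f' [Hd Hc]]. exists f'; split; auto.
  intros x. apply is_derive_ext with f; auto.
Qed.

Lemma Cn_const n : forall c, Cn n (fun _ => c).
Proof.
  induction n; intros c; simpl; auto.
  exists (fun _ => 0). split; auto. intros x. exact (is_derive_const c x).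
Qed.

Lemma Cn_id n : Cn n (fun x => x).
Proof.
  destruct n; simpl; auto.
  exists (fun _ => 1). split. intros x; exact (is_derive_id x). apply Cn_const.
Qed.

Lemma Cn_plus n : forall f g, Cn n f -> Cn n g -> Cn n (fun x => f x + g x).
Proof.
  induction n as [|n IH]; intros f g Hf Hg; simpl; auto.
  destruct Hf as [f' [Hf Hf']]; destruct Hg as [g' [Hg Hg']].
  exists (fun x => f' x + g' x); split; auto.
  intros x. exact (is_derive_plus f g x _ _ (Hf x) (Hg x)).
Qed.

Lemma Cn_mult n : forall f g, Cn n f -> Cn n g -> Cn n (fun x => f x * g x).
Proof.
  induction n as [|n IH]; intros f g Hf Hg; simpl; auto.
  pose proof (Cn_S _ _ Hf) as Hf0. pose proof (Cn_S _ _ Hg) as Hg0.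
  destruct Hf as [f' [Hf Hf']]; destruct Hg as [g' [Hg Hg']].
  exists (fun x => f' x * g x + f x * g' x); split.
  - intros x. apply (is_derive_mult f g); auto. intros; apply Rmult_comm.
  - apply Cn_plus; apply IH; auto.
Qed.

Lemma Cn_comp n : forall f g, Cn n f -> Cn n g -> Cn n (fun x => f (g x)).
Proof.
  induction n as [|n IH]; intros f g Hf Hg; simpl; auto.
  pose proof (Cn_S _ _ Hf) as Hf0. pose proof (Cn_S _ _ Hg) as Hg0.
  destruct Hf as [f' [Hf Hf']]; destruct Hg as [g' [Hg Hg']].
  exists (fun x => g' x * f' (g x)); split.
  - intros x. exact (is_derive_comp f g x _ _ (Hf (g x)) (Hg x)).
  - apply Cn_mult; auto.
Qed.

Lemma Cn_inv n : forall g, (forall x, g x <> 0) -> Cn n g -> Cn n (fun x => / g x).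
Proof.
  induction n as [|n IH]; intros g Hnz Hg; simpl; auto.
  pose proof (Cn_S _ _ Hg) as Hg0.
  destruct Hg as [g' [Hg Hg']].
  exists (fun x => - g' x / g x ^ 2); split.
  - intros x. exact (is_derive_inv g x _ (Hg x) (Hnz x)).
  - apply Cn_ext with (fun x => ((-1) * g' x) * ((/ g x) * (/ g x))).
    intros x; field; auto.
    apply Cn_mult. apply (Cn_mult n (fun _ => -1)); auto. apply Cn_const.
    apply Cn_mult; apply IH; auto.
Qed.

Lemma Cn_exp n : Cn n exp.
Proof.
  induction n; simpl; auto. exists exp; split; auto. intros x; exact (is_derive_exp x).
Qed.

Inductive poly : (R -> R) -> Prop :=
| pc c : poly (fun _ => c)
| px : poly (fun x => x)
| padd p q : poly p -> poly q -> poly (fun x => p x + q x)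
| pmul p q : poly p -> poly q -> poly (fun x => p x * q x).

Lemma poly_deriv p : poly p -> exists p', poly p' /\ forall y, is_derive p y (p' y).
Proof.
  induction 1 as [c| |p q _ [p' [Hp Dp]] _ [q' [Hq Dq]]|p q Hp0 [p' [Hp Dp]] Hq0 [q' [Hq Dq]]].
  - exists (fun _ => 0); split. constructor. intros y; exact (is_derive_const c y).
  - exists (fun _ => 1); split. constructor. intros y; exact (is_derive_id y).
  - exists (fun y => p' y + q' y); split. constructor; auto.
    intros y; exact (is_derive_plus p q y _ _ (Dp y) (Dq y)).
  - exists (fun y => p' y * q y + p y * q' y); split. constructor; constructor; auto.
    intros y; exact (is_derive_mult p q y _ _ (Dp y) (Dq y) Rmult_comm).
Qed.

Lemma poly_bound p : poly p -> exists C k, 0 <= C /\ forall y, 1 <= y -> Rabs (p y) <= C * y ^ k.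
Proof.
  induction 1 as [c| |p q _ [C1 [k1 [H1 B1]]] _ [C2 [k2 [H2 B2]]]|p q _ [C1 [k1 [H1 B1]]] _ [C2 [k2 [H2 B2]]]].
  - exists (Rabs c), 0%nat; split. apply Rabs_pos. intros; simpl; lra.
  - exists 1, 1%nat; split. lra. intros y Hy; simpl. rewrite Rabs_pos_eq; lra.
  - exists (C1 + C2), (Nat.max k1 k2); split. lra. intros y Hy.
    eapply Rle_trans. apply Rabs_triang.
    assert (y ^ k1 <= y ^ Nat.max k1 k2) by (apply Rle_pow; auto; apply Nat.le_max_l).
    assert (y ^ k2 <= y ^ Nat.max k1 k2) by (apply Rle_pow; auto; apply Nat.le_max_r).
    specialize (B1 y Hy); specialize (B2 y Hy).
    assert (C1 * y ^ k1 <= C1 * y ^ Nat.max k1 k2) by (apply Rmult_le_compat_l; auto).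
    assert (C2 * y ^ k2 <= C2 * y ^ Nat.max k1 k2) by (apply Rmult_le_compat_l; auto).
    lra.
  - exists (C1 * C2), (k1 + k2)%nat; split. apply Rmult_le_pos; auto. intros y Hy.
    rewrite Rabs_mult, pow_add.
    replace (C1 * C2 * (y ^ k1 * y ^ k2)) with ((C1 * y ^ k1) * (C2 * y ^ k2)) by ring.
    apply Rmult_le_compat; auto using Rabs_pos.
Qed.

Lemma exp_pow_n n x : exp (INR n * x) = exp x ^ n.
Proof.
  induction n. simpl. rewrite Rmult_0_l, exp_0; auto.
  rewrite S_INR, Rmult_plus_distr_r, Rmult_1_l, exp_plus, IHn. simpl; ring.
Qed.

Lemma exp_lower m y : 0 <= y -> (y / INR (S m)) ^ (S m) <= exp y.
Proof.
  intros Hy.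
  assert (Hm : 0 < INR (S m)) by (apply lt_0_INR; lia).
  replace (exp y) with (exp (y / INR (S m)) ^ (S m)).
  2:{ rewrite <- exp_pow_n. f_equal. field. lra. }
  apply pow_incr. split. apply Rdiv_le_0_compat; lra.
  pose proof (exp_ineq1_le (y / INR (S m))).
  assert (0 <= y / INR (S m)) by (apply Rdiv_le_0_compat; lra). lra.
Qed.

Lemma poly_exp_bound p : poly p -> exists K, 0 <= K /\
  forall h, 0 < h <= 1 -> Rabs (p (/ h) * exp (- / h)) <= K * h ^ 2.
Proof.
  intros Hp. destruct (poly_bound p Hp) as [C [k [HC B]]].
  set (M := INR (S (S k)) ^ (S (S k))).
  assert (HM0 : 0 < INR (S (S k))) by (apply lt_0_INR; lia).
  assert (HM : 0 < M) by (apply pow_lt; auto).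
  exists (C * M); split. apply Rmult_le_pos; lra.
  intros h Hh. set (y := / h).
  assert (Hy1 : 1 <= y). { unfold y. rewrite <- Rinv_1. apply Rinv_le_contravar; lra. }
  assert (Hhy : h = / y). { unfold y. rewrite Rinv_inv; auto. }
  rewrite Hhy. clearbody y. clear Hhy Hh.
  rewrite Rabs_mult, (Rabs_pos_eq (exp _)) by (left; apply exp_pos).
  rewrite exp_Ropp.
  pose proof (exp_lower (S k) y ltac:(lra)) as E.
  assert (E' : y ^ (S (S k)) / M <= exp y).
  { eapply Rle_trans. 2: apply E. unfold M, Rdiv. rewrite Rpow_mult_distr.
    rewrite pow_inv. right; reflexivity. }
  assert (Hyk : 0 < y ^ (S (S k))) by (apply pow_lt; lra).
  assert (Hq : 0 < y ^ (S (S k)) / M) by (apply Rdiv_lt_0_compat; auto).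
  assert (Iv : / exp y <= / (y ^ (S (S k)) / M)) by (apply Rinv_le_contravar; auto).
  specialize (B y Hy1).
  assert (Hpos : 0 <= / exp y) by (left; apply Rinv_0_lt_compat, exp_pos).
  eapply Rle_trans. apply Rmult_le_compat; eauto using Rabs_pos.
  replace (y ^ (S (S k))) with (y ^ k * y ^ 2) by (rewrite <- pow_add; f_equal; lia).
  assert (0 < y ^ k) by (apply pow_lt; lra).
  right. field. split; lra.
Qed.

Definition Fl (p : R -> R) (x : R) : R :=
  if Rlt_dec 0 x then p (/ x) * exp (- / x) else 0.

Lemma flat0 g K : g 0 = 0 -> 0 <= K -> (forall h, Rabs h < 1 -> Rabs (g h) <= K * h ^ 2) ->
  is_derive g 0 0.
Proof.
  intros H0 HK B. apply is_derive_Reals. intros eps He.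
  assert (Hd : 0 < Rmin 1 (eps / (K + 1))).
  { apply Rmin_glb_lt. lra. apply Rdiv_lt_0_compat; lra. }
  exists (mkposreal _ Hd). intros h Hh Hlt. simpl in Hlt.
  rewrite Rplus_0_l, H0, Rminus_0_r, Rminus_0_r.
  assert (Ha : 0 < Rabs h) by (apply Rabs_pos_lt; auto).
  assert (Hl1 : Rabs h < 1) by (eapply Rlt_le_trans; [apply Hlt| apply Rmin_l]).
  assert (Hl2 : Rabs h < eps / (K + 1)) by (eapply Rlt_le_trans; [apply Hlt| apply Rmin_r]).
  specialize (B h Hl1). rewrite <- pow2_abs in B.
  unfold Rdiv. rewrite Rabs_mult, Rabs_inv.
  assert (Hl3 : Rabs h * (K + 1) < eps).
  { apply (Rmult_lt_compat_r (K+1)) in Hl2; [|lra].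
    unfold Rdiv in Hl2. rewrite Rmult_assoc, Rinv_l in Hl2 by lra. lra. }
  apply Rmult_lt_reg_r with (Rabs h); auto.
  rewrite Rmult_assoc, Rinv_l by lra. nra.
Qed.

Lemma loc_of x e (P : R -> Prop) : 0 < e -> (forall y, Rabs (y - x) < e -> P y) -> locally x P.
Proof.
  intros He H. exists (mkposreal e He). intros y Hy. apply H. exact Hy.
Qed.

Lemma is_derive_eqv (f : R -> R) x l l' : is_derive f x l -> l = l' -> is_derive f x l'.
Proof. intros H ->; auto. Qed.

Lemma Fl_deriv p : poly p -> exists q, poly q /\ forall x, is_derive (Fl p) x (Fl q x).
Proof.
  intros Hp. destruct (poly_deriv p Hp) as [p' [Hp' Dp]].
  exists (fun y => (y * y) * (p y + (-1) * p' y)); split.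
  { repeat constructor; auto. }
  intros x. destruct (Rtotal_order x 0) as [Hx|[Hx|Hx]].
  - apply is_derive_ext_loc with (fun _ => 0).
    apply loc_of with (- x). lra. intros y Hy. unfold Fl.
    destruct (Rlt_dec 0 y); auto. exfalso. apply Rabs_def2 in Hy. lra.
    unfold Fl. destruct (Rlt_dec 0 x). lra. exact (is_derive_const 0 x).
  - subst x. destruct (poly_exp_bound p Hp) as [K [HK B]].
    unfold Fl at 2. destruct (Rlt_dec 0 0). lra.
    apply flat0 with K; auto.
    + unfold Fl. destruct (Rlt_dec 0 0); auto. lra.
    + intros h Hh. unfold Fl. destruct (Rlt_dec 0 h).
      apply B. split; auto. apply Rabs_def2 in Hh. lra.
      rewrite Rabs_R0. apply Rmult_le_pos; auto. apply pow2_ge_0.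
  - apply is_derive_ext_loc with (fun t => p (/ t) * exp (- / t)).
    apply loc_of with x. lra. intros y Hy. unfold Fl.
    destruct (Rlt_dec 0 y); auto. exfalso. apply Rabs_def2 in Hy. lra.
    assert (Hx0 : x <> 0) by lra.
    pose proof (is_derive_inv (fun t => t) x 1 (is_derive_id x) Hx0) as Hinv.
    simpl in Hinv.
    pose proof (is_derive_comp p (fun t => / t) x _ _ (Dp (/ x)) Hinv) as H1.
    pose proof (is_derive_opp (fun t => / t) x _ Hinv) as H2.
    pose proof (is_derive_comp exp (fun t => - / t) x _ _ (is_derive_exp _) H2) as H3.
    pose proof (is_derive_mult _ _ x _ _ H1 H3 Rmult_comm) as H4.
    eapply is_derive_eqv. exact H4.
    unfold Fl. destruct (Rlt_dec 0 x); [|lra].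
    unfold scal, mult, plus, opp; simpl. unfold mult; simpl. field. auto.
Qed.

Lemma Cn_Fl n : forall p, poly p -> Cn n (Fl p).
Proof.
  induction n as [|n IH]; intros p Hp; simpl; auto.
  destruct (Fl_deriv p Hp) as [q [Hq D]]. exists (Fl q); split; auto.
Qed.

Lemma Sm_deriv f : Sm f -> Sm (Derive f) /\ forall x, is_derive f x (Derive f x).
Proof.
  intros H.
  assert (D : forall x, is_derive f x (Derive f x)).
  { intros x. destruct (H 1%nat) as [f' [Hd _]]. rewrite (is_derive_unique _ _ _ (Hd x)); auto. }
  split; auto. intros n. destruct (H (S n)) as [f' [Hd Hc]].
  apply Cn_ext with f'; auto. intros x. symmetry. apply is_derive_unique; auto.
Qed.

Lemma Cn_smooth n : forall f, Cn (S n) f -> forall x, ex_derive (Derive_n f n) x.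
Proof.
  induction n as [|n IH]; intros f H x.
  - destruct H as [f' [Hd _]]. simpl. exists (f' x); auto.
  - destruct H as [f' [Hd Hc]].
    assert (E : Derive_n f (S n) = Derive_n f' n).
    { apply functional_extensionality; intros y.
      rewrite <- Nat.add_1_r, <- Derive_n_comp. apply Derive_n_ext.
      intros z. simpl. apply is_derive_unique; auto. }
    rewrite E. apply IH; auto.
Qed.

Lemma Sm_cont f : Sm f -> forall x, continuous f x.
Proof.
  intros H x. destruct (H 1%nat) as [f' [Hd _]]. apply (ex_derive_continuous f x). exists (f' x); auto.
Qed.

Lemma Sm_RInt g a : Sm g -> Sm (fun t => RInt g a t) /\ forall t, is_derive (fun t => RInt g a t) t (g t).
Proof.
  intros H. pose proof (Sm_cont g H) as Hc.
  assert (D : forall t, is_derive (fun t => RInt g a t) t (g t)).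
  { intros t. apply is_derive_RInt with (a := a); auto.
    exists (mkposreal 1 Rlt_0_1). intros y _. apply RInt_correct.
    apply ex_RInt_continuous. intros; auto. }
  split; auto. intros n. destruct n; simpl; auto. exists g; split; auto.
Qed.

Lemma odd_int f a : (forall x, continuous f x) -> (forall x, f (- x) = - f x) ->
  RInt f (- a) a = 0.
Proof.
  intros Hc Ho.
  assert (Ex : ex_RInt f (- a) a) by (apply (@ex_RInt_continuous R_CompleteNormedModule); auto).
  pose proof (RInt_correct _ _ _ Ex) as H.
  set (I := RInt f (- a) a) in *.
  assert (H1 : is_RInt f (- a) (- - a) I) by (rewrite Ropp_involutive; auto).
  apply is_RInt_comp_opp in H1.
  apply is_RInt_ext with (g := f) in H1.
  2:{ intros x _. rewrite Ho. unfold opp; simpl. ring. }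
  apply is_RInt_swap in H1.
  pose proof (is_RInt_unique _ _ _ _ H) as U1.
  pose proof (is_RInt_unique _ _ _ _ H1) as U2.
  unfold opp in U2; simpl in U2. clearbody I. lra.
Qed.

Lemma refl_deriv f s : (forall x, is_derive f x (Derive f x)) -> (forall y, f (- y) = s * f y) ->
  forall x, Derive f (- x) = - s * Derive f x.
Proof.
  intros D Hs x.
  assert (H1 : is_derive (fun y => f (- y)) x (- Derive f (- x))).
  { eapply is_derive_eqv.
    exact (is_derive_comp f (fun y => - y) x _ _ (D (- x)) (is_derive_opp (fun y => y) x _ (is_derive_id x))).
    unfold scal, opp, one; simpl. unfold mult; simpl. ring. }
  pose proof (is_derive_scal f x s _ (D x)) as H2.
  apply (is_derive_ext _ (fun y => s * f y)) in H1; [|exact Hs].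
  apply is_derive_unique in H1. apply is_derive_unique in H2.
  assert (Derive (fun y => s * f y) x = Derive (fun y => s * f y) x) as _ by reflexivity. simpl in H1, H2. rewrite H1 in H2. lra.
Qed.

Lemma is_RInt_lin (f g : R -> R) a b If Ig (al be : R) :
  is_RInt f a b If -> is_RInt g a b Ig ->
  is_RInt (fun x => al * f x + be * g x) a b (al * If + be * Ig).
Proof.
  intros H1 H2.
  exact (is_RInt_plus _ _ a b _ _ (is_RInt_scal f a b al If H1) (is_RInt_scal g a b be Ig H2)).
Qed.

Lemma is_RInt_cst (a b c : R) : is_RInt (fun _ => c) a b ((b - a) * c).
Proof. exact (is_RInt_const a b c). Qed.

Definition onef (x : R) := 1.
Definition St x := Fl onef x / (Fl onef x + Fl onef (1 - x)).

Lemma Fl1_nonneg x : 0 <= Fl onef x.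
Proof. unfold Fl, onef. destruct (Rlt_dec 0 x). left; rewrite Rmult_1_l; apply exp_pos. lra. Qed.
Lemma Fl1_pos x : 0 < x -> 0 < Fl onef x.
Proof. intros H. unfold Fl, onef. destruct (Rlt_dec 0 x). rewrite Rmult_1_l; apply exp_pos. lra. Qed.
Lemma Fl1_zero x : x <= 0 -> Fl onef x = 0.
Proof. intros H. unfold Fl. destruct (Rlt_dec 0 x). lra. auto. Qed.
Lemma den_pos x : 0 < Fl onef x + Fl onef (1 - x).
Proof.
  pose proof (Fl1_nonneg x). pose proof (Fl1_nonneg (1 - x)).
  destruct (Rlt_dec 0 x). pose proof (Fl1_pos x r). lra.
  pose proof (Fl1_pos (1 - x) ltac:(lra)). lra.
Qed.

Lemma Sm_St : Sm St.
Proof.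
  intros n. unfold St.
  assert (P : poly onef) by (unfold onef; constructor).
  apply Cn_ext with (fun x => Fl onef x * / (Fl onef x + Fl onef (1 - x))). intros; reflexivity.
  apply Cn_mult. apply Cn_Fl; auto.
  apply Cn_inv. intros x; pose proof (den_pos x); lra.
  apply Cn_plus. apply Cn_Fl; auto.
  apply (Cn_comp n (Fl onef) (fun x => 1 - x)). apply Cn_Fl; auto.
  apply Cn_ext with (fun x => 1 + (-1) * x). intros; ring.
  apply Cn_plus. apply Cn_const. apply (Cn_mult n (fun _ => -1)). apply Cn_const. apply Cn_id.
Qed.

Lemma St_sym x : St (1 - x) = 1 - St x.
Proof.
  unfold St. replace (1 - (1 - x)) with x by ring. pose proof (den_pos x).
  field. lra.
Qed.

Lemma St_bound x : 0 <= St x <= 1.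
Proof.
  unfold St. pose proof (den_pos x). pose proof (Fl1_nonneg x). pose proof (Fl1_nonneg (1 - x)).
  split. apply Rdiv_le_0_compat; lra.
  apply Rmult_le_reg_r with (Fl onef x + Fl onef (1 - x)); auto.
  unfold Rdiv. rewrite Rmult_assoc, Rinv_l by lra. lra.
Qed.

Definition sfun t := 2 * St (t + / 2) - 1.

Lemma s_odd t : sfun (- t) = - sfun t.
Proof.
  unfold sfun. replace (- t + / 2) with (1 - (t + / 2)) by field. rewrite St_sym. ring.
Qed.

Lemma s_right t : / 2 <= t -> sfun t = 1.
Proof.
  intros H. unfold sfun, St. rewrite (Fl1_zero (1 - (t + / 2))) by lra.
  pose proof (Fl1_pos (t + / 2) ltac:(lra)). field. lra.
Qed.

Lemma s_left t : t <= - / 2 -> sfun t = -1.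
Proof.
  intros H. unfold sfun, St. rewrite (Fl1_zero (t + / 2)) by lra.
  pose proof (den_pos (t + / 2)). unfold Rdiv. ring.
Qed.

Lemma s_bound t : -1 <= sfun t <= 1.
Proof. unfold sfun. pose proof (St_bound (t + / 2)). lra. Qed.

Lemma Sm_s : Sm sfun.
Proof.
  intros n. unfold sfun.
  apply Cn_plus. apply (Cn_mult n (fun _ => 2)). apply Cn_const.
  apply (Cn_comp n St (fun t => t + / 2)). apply Sm_St. apply Cn_plus. apply Cn_id. apply Cn_const.
  apply Cn_ext with (fun _ => -1). intros; ring. apply Cn_const.
Qed.

Definition s1 := Derive sfun.
Definition s2 := Derive s1.

Lemma s_props : Sm s1 /\ Sm s2 /\ (forall x, is_derive sfun x (s1 x)) /\ (forall x, is_derive s1 x (s2 x)).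
Proof.
  destruct (Sm_deriv sfun Sm_s) as [H1 D1].
  destruct (Sm_deriv s1 H1) as [H2 D2]. auto.
Qed.

Lemma s1_even x : s1 (- x) = s1 x.
Proof.
  destruct s_props as [_ [_ [D1 _]]].
  unfold s1. rewrite (refl_deriv sfun (-1)). lra. exact D1. intros y; rewrite s_odd; lra.
Qed.

Lemma s2_odd x : s2 (- x) = - s2 x.
Proof.
  destruct s_props as [_ [_ [_ D2]]].
  unfold s2. rewrite (refl_deriv s1 1). lra. exact D2. intros y; rewrite s1_even; lra.
Qed.

Lemma s1_out x : / 2 < Rabs x -> s1 x = 0.
Proof.
  intros H. unfold s1. apply is_derive_unique.
  destruct (Rle_dec 0 x).
  - rewrite Rabs_pos_eq in H by auto.
    apply is_derive_ext_loc with (fun _ => 1).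
    apply loc_of with (x - / 2). lra. intros y Hy. apply Rabs_def2 in Hy. rewrite s_right; auto; lra.
    exact (is_derive_const 1 x).
  - rewrite Rabs_left in H by lra.
    apply is_derive_ext_loc with (fun _ => -1).
    apply loc_of with (- x - / 2). lra. intros y Hy. apply Rabs_def2 in Hy. rewrite s_left; auto; lra.
    exact (is_derive_const (-1) x).
Qed.

Lemma s2_out x : / 2 < Rabs x -> s2 x = 0.
Proof.
  intros H. unfold s2. apply is_derive_unique.
  apply is_derive_ext_loc with (fun _ => 0).
  apply loc_of with (Rabs x - / 2). lra. intros y Hy.
  rewrite s1_out; auto.
  pose proof (Rabs_triang_inv x (x - y)). replace (x - (x - y)) with y in H0 by ring.
  rewrite Rabs_minus_sym in Hy. lra.
  exact (is_derive_const 0 x).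
Qed.

Lemma Sm_plus f g : Sm f -> Sm g -> Sm (fun x => f x + g x).
Proof. intros H1 H2 n; apply Cn_plus; auto. Qed.
Lemma Sm_mult f g : Sm f -> Sm g -> Sm (fun x => f x * g x).
Proof. intros H1 H2 n; apply Cn_mult; auto. Qed.
Lemma Sm_const c : Sm (fun _ => c).
Proof. intros n; apply Cn_const. Qed.
Lemma Sm_id : Sm (fun x => x).
Proof. intros n; apply Cn_id. Qed.

Lemma is_RInt_eqv (f : R -> R) a b l l' : is_RInt f a b l -> l = l' -> is_RInt f a b l'.
Proof. intros H ->; auto. Qed.

Lemma Jc f : Sm f -> is_RInt f (-(3/4)) (3/4) (RInt f (-(3/4)) (3/4)).
Proof.
  intros H. apply (@RInt_correct R_CompleteNormedModule). apply (@ex_RInt_continuous R_CompleteNormedModule).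
  intros; apply Sm_cont; auto.
Qed.

Lemma Sm_s2 : Sm s2.
Proof. destruct s_props as [_ [H _]]; auto. Qed.
Lemma Sm_s1 : Sm s1.
Proof. destruct s_props as [H _]; auto. Qed.

Lemma A_le : RInt (fun t => sfun t * sfun t) (-(3/4)) (3/4) <= 3/2.
Proof.
  replace (3/2) with (RInt (fun _ => 1) (-(3/4)) (3/4)).
  2:{ rewrite RInt_const. unfold scal; simpl; unfold mult; simpl. lra. }
  apply RInt_le. lra.
  eexists; apply Jc, Sm_mult; apply Sm_s.
  eexists; apply is_RInt_cst.
  intros x _. pose proof (s_bound x). nra.
Qed.

Lemma Tts2 : is_RInt (fun t => t * s2 t) (-(3/4)) (3/4) (-2).
Proof.
  destruct s_props as [_ [_ [D1 D2]]].
  assert (H : is_RInt (fun t => t * s2 t) (-(3/4)) (3/4)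
     (minus ((fun t => t * s1 t - sfun t) (3/4)) ((fun t => t * s1 t - sfun t) (-(3/4))))).
  { apply (@is_RInt_derive R_CompleteNormedModule (fun t => t * s1 t - sfun t)).
    - intros x _. eapply is_derive_eqv.
      exact (is_derive_minus _ _ x _ _ (is_derive_mult (fun t => t) s1 x _ _ (is_derive_id x) (D2 x) Rmult_comm) (D1 x)).
      unfold minus, plus, opp, mult, Hierarchy.one; simpl. lra.
    - intros x _. apply Sm_cont. apply Sm_mult. apply Sm_id. apply Sm_s2. }
  eapply is_RInt_eqv. exact H. unfold minus, plus, opp; simpl.
  rewrite (s1_out (3/4)), (s1_out (-(3/4))), s_right, s_left; try lra.
  all: try (rewrite Rabs_pos_eq; lra). all: try (rewrite Rabs_left; lra).
Qed.

Lemma Tt2 : is_RInt (fun t => t * t) (-(3/4)) (3/4) (9/32).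
Proof.
  eapply is_RInt_eqv.
  apply (@is_RInt_derive R_CompleteNormedModule (fun t => / 3 * (t * t * t))).
  - intros x _. eapply is_derive_eqv.
    exact (is_derive_scal _ x (/3) _ (is_derive_mult (fun t => t * t) (fun t => t) x _ _
      (is_derive_mult (fun t => t) (fun t => t) x _ _ (is_derive_id x) (is_derive_id x) Rmult_comm)
      (is_derive_id x) Rmult_comm)).
    unfold plus, mult, Hierarchy.one; simpl. field.
  - intros x _. apply Sm_cont. apply Sm_mult; apply Sm_id.
  - unfold minus, plus, opp; simpl. field.
Qed.

Lemma C_pos : 0 < RInt (fun t => s2 t * s2 t) (-(3/4)) (3/4).
Proof.
  set (Cc := RInt (fun t => s2 t * s2 t) (-(3/4)) (3/4)).
  assert (HC : is_RInt (fun t => s2 t * s2 t) (-(3/4)) (3/4) Cc) by (apply Jc, Sm_mult; apply Sm_s2).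
  pose proof (is_RInt_lin _ _ _ _ _ _ 1 1 (is_RInt_lin _ _ _ _ _ _ 1 2 HC Tts2) Tt2) as H.
  assert (H' : is_RInt (fun t => (s2 t + t) * (s2 t + t)) (-(3/4)) (3/4) (1 * (1 * Cc + 2 * -2) + 1 * (9/32))).
  { eapply is_RInt_ext; [|exact H]. intros x _. simpl. ring. }
  assert (G : 0 <= RInt (fun t => (s2 t + t) * (s2 t + t)) (-(3/4)) (3/4)).
  { apply RInt_ge_0. lra. eexists; exact H'. intros x _. cbv beta. apply Rle_0_sqr. }
  rewrite (is_RInt_unique _ _ _ _ H') in G. lra.
Qed.

Ltac rr := match goal with |- @eq _ ?a ?b => change (@eq R a b) end.

Lemma main_aux (A7 A8 : R) :
  exists gamma2 gamma3 : R -> R,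
    smooth_on_I gamma2 /\ smooth_on_I gamma3 /\
    (forall t, 3/4 <= t <= 1 -> gamma2 t = - (1/2) * A7 ^ 2 * t) /\
    (forall t, -1 <= t <= -(3/4) -> gamma2 t = - (1/2) * A8 ^ 2 * t) /\
    (forall t, 3/4 <= t <= 1 -> gamma3 t = A7 * t) /\
    (forall t, -1 <= t <= -(3/4) -> gamma3 t = A8 * t) /\
    (forall t, -1 <= t <= 1 ->
       2 * Derive gamma2 t + (Derive gamma3 t) ^ 2 = 0).
Proof.
  set (A := RInt (fun t => sfun t * sfun t) (-(3/4)) (3/4)).
  set (B := RInt (fun t => sfun t * s2 t) (-(3/4)) (3/4)).
  set (Cc := RInt (fun t => s2 t * s2 t) (-(3/4)) (3/4)).
  assert (HA : is_RInt (fun t => sfun t * sfun t) (-(3/4)) (3/4) A) by (apply Jc, Sm_mult; apply Sm_s).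
  assert (HB : is_RInt (fun t => sfun t * s2 t) (-(3/4)) (3/4) B) by (apply Jc, Sm_mult; [apply Sm_s|apply Sm_s2]).
  assert (HCc : is_RInt (fun t => s2 t * s2 t) (-(3/4)) (3/4) Cc) by (apply Jc, Sm_mult; apply Sm_s2).
  assert (Apos : A <= 3/2) by apply A_le.
  assert (Cpos : 0 < Cc) by apply C_pos.
  clearbody A B Cc.
  set (D := B * B + Cc * (3/2 - A)).
  assert (HD : 0 <= D) by (unfold D; nra).
  set (r := sqrt D).
  assert (Hr : r * r = D) by (apply sqrt_sqrt; auto).
  set (c := (r - B) / Cc).
  assert (Ec : Cc * c = r - B) by (unfold c; rr; field; lra).
  clearbody r c. 
  set (w := fun t => sfun t + c * s2 t).
  assert (Smw : Sm w) by (apply Sm_plus; [apply Sm_s| apply Sm_mult; [apply Sm_const|apply Sm_s2]]).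
  assert (wr : forall t, / 2 < t -> w t = 1).
  { intros t Ht. unfold w. rewrite s_right, s2_out; try lra. rewrite Rabs_pos_eq; lra. }
  assert (wl : forall t, t < - / 2 -> w t = -1).
  { intros t Ht. unfold w. rewrite s_left, s2_out; try lra. rewrite Rabs_left; lra. }
  assert (Iw : is_RInt w (-(3/4)) (3/4) 0).
  { rewrite <- (odd_int w (3/4)). apply Jc; auto. apply Sm_cont; auto.
    intros x. unfold w. rewrite s_odd, s2_odd. lra. }
  assert (Iw2 : is_RInt (fun t => w t * w t) (-(3/4)) (3/4) (3/2)).
  { pose proof (is_RInt_lin _ _ _ _ _ _ 1 (c * c) (is_RInt_lin _ _ _ _ _ _ 1 (2 * c) HA HB) HCc) as H.
    eapply is_RInt_eqv. eapply is_RInt_ext; [|exact H]. intros x _. unfold w. simpl. rr; field.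
    apply Rmult_eq_reg_l with Cc; [|lra]. 
    replace (Cc * (1 * (1 * A + 2 * c * B) + c * c * Cc)) with (Cc * A + 2 * B * (Cc * c) + (Cc * c) * (Cc * c)) by (rr; field).
    rewrite Ec. unfold D in Hr. nra. }
  set (m := (A7 + A8) / 2). set (d := (A7 - A8) / 2).
  set (v := fun t => m + d * w t).
  assert (Smv : Sm v) by (apply Sm_plus; [apply Sm_const| apply Sm_mult; [apply Sm_const|auto]]).
  assert (Smv2 : Sm (fun t => v t * v t)) by (apply Sm_mult; auto).
  assert (vr : forall t, / 2 < t -> v t = A7).
  { intros t Ht. unfold v. rewrite wr; auto. unfold m, d; rr; field. }
  assert (vl : forall t, t < - / 2 -> v t = A8).
  { intros t Ht. unfold v. rewrite wl; auto. unfold m, d; rr; field. }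
  assert (Iv : is_RInt v (-(3/4)) (3/4) (3/2 * m)).
  { pose proof (is_RInt_lin _ _ _ _ _ _ 1 d (is_RInt_cst (-(3/4)) (3/4) m) Iw) as H.
    eapply is_RInt_eqv. eapply is_RInt_ext; [|exact H]. intros x _. unfold v. simpl. rr; field.
    rr; field. }
  assert (Iv2 : is_RInt (fun t => v t * v t) (-(3/4)) (3/4) (3/2 * (m * m + d * d))).
  { pose proof (is_RInt_lin _ _ _ _ _ _ 1 (d * d) (is_RInt_lin _ _ _ _ _ _ 1 (2 * m * d) (is_RInt_cst (-(3/4)) (3/4) (m * m)) Iw) Iw2) as H.
    eapply is_RInt_eqv. eapply is_RInt_ext; [|exact H]. intros x _. unfold v. simpl. rr; field.
    rr; field. }
  assert (Rr : forall (f : R -> R) k t, (forall x, 3/4 < x -> f x = k) -> 3/4 <= t ->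
              RInt f (3/4) t = (t - 3/4) * k).
  { intros f k t Hf Ht. apply is_RInt_unique. eapply is_RInt_ext; [|apply is_RInt_cst].
    intros x Hx. rewrite Rmin_left in Hx by lra. symmetry; apply Hf; lra. }
  assert (Rl : forall (f : R -> R) k t I, is_RInt f (-(3/4)) (3/4) I ->
              (forall x, x < -(3/4) -> f x = k) -> t <= -(3/4) ->
              RInt f (3/4) t = - I + (t + 3/4) * k).
  { intros f k t I HI Hf Ht. apply is_RInt_unique.
    eapply is_RInt_eqv. eapply is_RInt_Chasles. apply is_RInt_swap. exact HI.
    eapply is_RInt_ext; [|apply is_RInt_cst].
    intros x Hx. rewrite Rmax_left in Hx by lra. symmetry; apply Hf; lra.
    unfold plus, opp; simpl. rr; field. }
  destruct (Sm_RInt v (3/4) Smv) as [Sg3 Dg3].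
  destruct (Sm_RInt (fun t => v t * v t) (3/4) Smv2) as [Sg2 Dg2].
  exists (fun t => - (3/8) * A7 ^ 2 + - (1/2) * RInt (fun y => v y * v y) (3/4) t).
  exists (fun t => 3/4 * A7 + RInt v (3/4) t).
  split; [|split; [|split; [|split; [|split; [|split]]]]].
  - intros n x _. apply (Cn_smooth n). apply Cn_plus. apply Cn_const.
    apply (Cn_mult _ (fun _ => - (1/2))). apply Cn_const. apply Sg2.
  - intros n x _. apply (Cn_smooth n). apply Cn_plus. apply Cn_const. apply Sg3.
  - intros t Ht. rewrite (Rr _ (A7 * A7)); [|intros; rewrite vr; lra | lra]. simpl. rr; field.
  - intros t Ht. rewrite (Rl _ (A8 * A8) t _ Iv2); [|intros; rewrite vl; lra | lra].
    unfold m, d. simpl. rr; field.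
  - intros t Ht. rewrite (Rr _ A7); [|intros; rewrite vr; lra | lra]. rr; field.
  - intros t Ht. rewrite (Rl _ A8 t _ Iv); [|intros; rewrite vl; lra | lra].
    unfold m. rr; field.
  - intros t _.
    match goal with |- 2 * Derive ?g2 t + Derive ?g3 t ^ 2 = 0 =>
      assert (E2 : is_derive g2 t (- (1/2) * (v t * v t)));
      [|assert (E3 : is_derive g3 t (v t));
        [|rewrite (is_derive_unique _ _ _ E2), (is_derive_unique _ _ _ E3)]] end.
    + eapply is_derive_eqv. exact (is_derive_plus _ _ t _ _ (is_derive_const (- (3/8) * A7 ^ 2) t) (is_derive_scal _ t (- (1/2)) _ (Dg2 t))).
      unfold plus, zero; simpl. generalize (v t). intros z. rr; field.
    + eapply is_derive_eqv. exact (is_derive_plus _ _ t _ _ (is_derive_const (3/4 * A7) t) (Dg3 t)).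
      unfold plus, zero; simpl. generalize (v t). intros z. rr; field.
    + simpl. generalize (v t). intros z. rr; field.
Qed.

Theorem lemma4p3 (A7 A8 : R) :
  exists gamma2 gamma3 : R -> R,
    smooth_on_I gamma2 /\ smooth_on_I gamma3 /\
    (forall t, 3/4 <= t <= 1 -> gamma2 t = - (1/2) * A7 ^ 2 * t) /\
    (forall t, -1 <= t <= -(3/4) -> gamma2 t = - (1/2) * A8 ^ 2 * t) /\
    (forall t, 3/4 <= t <= 1 -> gamma3 t = A7 * t) /\
    (forall t, -1 <= t <= -(3/4) -> gamma3 t = A8 * t) /\
    (forall t, -1 <= t <= 1 ->
       2 * Derive gamma2 t + (Derive gamma3 t) ^ 2 = 0).
Proof. exact (main_aux A7 A8). Qed.
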